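(* Let $(F\colon\mathcal C\to\mathcal D,U\colon\mathcal D\to\mathcal C)$ be a comonoidal adjunction between left (resp. right) closed monoidal categories. Then $(F,U)$ is a left (resp. right) Hopf adjunction if and only if $U$ (viewed as a strong monoidal functor) is left (resp. right) closed.
   Context: Monoidal categories are strict. A comonoidal adjunction is an adjunction $(F,U)$ with unit $\eta$, counit $\varepsilon$ between monoidal categories where $F,U$ are comonoidal functors (structure $F_2(X,Y)\colon F(X\otimes Y)\to FX\otimes FY$, $F_0\colon F\mathbb 1\to\mathbb 1$) and $\eta,\varepsilon$ are comonoidal; then $U$ is strong comonoidal, hence strong monoidal via the inverse structure maps. Hopf operators: $\mathbb H^l_{c,d}=(Fc\otimes\varepsilon_d)F_2(c,Ud)\colon F(c\otimes Ud)\to Fc\otimes d$, $\mathbb H^r_{d,c}=(\varepsilon_d\otimes Fc)F_2(Ud,c)\colon F(Ud\otimes c)\to d\otimes Fc$; the adjunction is left (resp. right) Hopf if $\mathbb H^l$ (resp. $\mathbb H^r$) is invertible. A monoidal category is left closed if each $?\otimes X$ has a right adjoint $[X,?]^l$ with counit $\mathrm{ev}^X_Y\colon[X,Y]^l\otimes X\to Y$, right closed if each $X\otimes ?$ has a right adjoint $[X,?]^r$ with counit $X\otimes[X,Y]^r\to Y$. A strong monoidal functor $U$ (structure $U_2(A,B)\colon UA\otimes UB\to U(A\otimes B)$) is left closed if the canonical morphisms $U[X,Y]^l\to[UX,UY]^l$ corresponding to $U(\mathrm{ev}^X_Y)U_2([X,Y]^l,X)$ are isomorphisms; right closed is defined analogously.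 *)

(* Defs.v *)
(* Categories are presented in the "arrows-only" style: a type of objects,
   a type of all morphisms, domain/codomain maps, identities and a composition
   [comp g f] (= g o f) that is meaningful when [cod f = dom g].
   This makes strictness of the monoidal structure expressible as plain
   equalities of objects and of morphisms, with no transports. *)

Set Implicit Arguments.
Unset Strict Implicit.

Record MonCat := {
  ob : Type;
  mor : Type;
  dom : mor -> ob;
  cod : mor -> ob;
  idm : ob -> mor;
  comp : mor -> mor -> mor;
  tob : ob -> ob -> ob;
  tmor : mor -> mor -> mor;
  munit : ob;
  dom_id : forall a, dom (idm a) = a;
  cod_id : forall a, cod (idm a) = a;
  dom_comp : forall f g, cod f = dom g -> dom (comp g f) = dom f;
  cod_comp : forall f g, cod f = dom g -> cod (comp g f) = cod g;
  comp_idl : forall f, comp (idm (cod f)) f = f;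
  comp_idr : forall f, comp f (idm (dom f)) = f;
  comp_assoc : forall f g h, cod f = dom g -> cod g = dom h ->
      comp h (comp g f) = comp (comp h g) f;
  dom_tmor : forall f g, dom (tmor f g) = tob (dom f) (dom g);
  cod_tmor : forall f g, cod (tmor f g) = tob (cod f) (cod g);
  tmor_id : forall a b, tmor (idm a) (idm b) = idm (tob a b);
  tmor_comp : forall f g f' g', cod f = dom g -> cod f' = dom g' ->
      tmor (comp g f) (comp g' f') = comp (tmor g g') (tmor f f');
  tob_assoc : forall a b c, tob (tob a b) c = tob a (tob b c);
  tmor_assoc : forall f g h, tmor (tmor f g) h = tmor f (tmor g h);
  tob_unitl : forall a, tob munit a = a;
  tob_unitr : forall a, tob a munit = a;
  tmor_unitl : forall f, tmor (idm munit) f = f;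
  tmor_unitr : forall f, tmor f (idm munit) = f
}.

Arguments dom {m} _.
Arguments cod {m} _.
Arguments idm {m} _.
Arguments comp {m} _ _.
Arguments tob {m} _ _.
Arguments tmor {m} _ _.

Definition hom (C : MonCat) (f : mor C) (a b : ob C) : Prop :=
  dom f = a /\ cod f = b.

Definition is_inverse (C : MonCat) (f g : mor C) : Prop :=
  dom g = cod f /\ cod g = dom f /\
  comp g f = idm (dom f) /\ comp f g = idm (cod f).

Definition is_iso (C : MonCat) (f : mor C) : Prop :=
  exists g, is_inverse f g.

Record Functor (C D : MonCat) := {
  fob : ob C -> ob D;
  fmor : mor C -> mor D;
  fmor_dom : forall f, dom (fmor f) = fob (dom f);
  fmor_cod : forall f, cod (fmor f) = fob (cod f);
  fmor_id : forall a, fmor (idm a) = idm (fob a);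
  fmor_comp : forall f g, cod f = dom g -> fmor (comp g f) = comp (fmor g) (fmor f)
}.

Record ComonFun (C D : MonCat) := {
  cfun :> Functor C D;
  F2 : ob C -> ob C -> mor D;
  F0 : mor D;
  F2_hom : forall X Y,
      hom (F2 X Y) (fob cfun (tob X Y)) (tob (fob cfun X) (fob cfun Y));
  F2_nat : forall f g,
      comp (tmor (fmor cfun f) (fmor cfun g)) (F2 (dom f) (dom g))
      = comp (F2 (cod f) (cod g)) (fmor cfun (tmor f g));
  F0_hom : hom F0 (fob cfun (munit C)) (munit D);
  F2_coassoc : forall X Y Z,
      comp (tmor (F2 X Y) (idm (fob cfun Z))) (F2 (tob X Y) Z)
      = comp (tmor (idm (fob cfun X)) (F2 Y Z)) (F2 X (tob Y Z));
  F0_counitl : forall X,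
      comp (tmor F0 (idm (fob cfun X))) (F2 (munit C) X) = idm (fob cfun X);
  F0_counitr : forall X,
      comp (tmor (idm (fob cfun X)) F0) (F2 X (munit C)) = idm (fob cfun X)
}.

(* Comonoidal adjunction F -| U, F : C -> D, U : D -> C, with unit eta and
   counit eps, both comonoidal natural transformations
   (eta : Id_C => UF, eps : FU => Id_D, where Id is strict comonoidal and UF, FU
   carry the composite comonoidal structures). *)
Record ComonAdj (C D : MonCat) := {
  LF : ComonFun C D;
  RU : ComonFun D C;
  eta : ob C -> mor C;
  eps : ob D -> mor D;
  eta_hom : forall c, hom (eta c) c (fob RU (fob LF c));
  eta_nat : forall f,
      comp (eta (cod f)) f = comp (fmor RU (fmor LF f)) (eta (dom f));
  eps_hom : forall d, hom (eps d) (fob LF (fob RU d)) d;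
  eps_nat : forall g,
      comp (eps (cod g)) (fmor LF (fmor RU g)) = comp g (eps (dom g));
  triangle_F : forall c,
      comp (eps (fob LF c)) (fmor LF (eta c)) = idm (fob LF c);
  triangle_U : forall d,
      comp (fmor RU (eps d)) (eta (fob RU d)) = idm (fob RU d);
  eta_comon2 : forall X Y,
      comp (comp (F2 RU (fob LF X) (fob LF Y)) (fmor RU (F2 LF X Y))) (eta (tob X Y))
      = comp (tmor (eta X) (eta Y)) (idm (tob X Y));
  eta_comon0 :
      comp (comp (F0 RU) (fmor RU (F0 LF))) (eta (munit C)) = idm (munit C);
  eps_comon2 : forall A B,
      comp (idm (tob A B)) (eps (tob A B))
      = comp (tmor (eps A) (eps B))
             (comp (F2 LF (fob RU A) (fob RU B)) (fmor LF (F2 RU A B)));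
  eps_comon0 :
      comp (idm (munit D)) (eps (munit D)) = comp (F0 LF) (fmor LF (F0 RU))
}.

Definition hopf_l (C D : MonCat) (A : ComonAdj C D) (c : ob C) (d : ob D) : mor D :=
  comp (tmor (idm (fob (LF A) c)) (eps A d)) (F2 (LF A) c (fob (RU A) d)).

Definition hopf_r (C D : MonCat) (A : ComonAdj C D) (d : ob D) (c : ob C) : mor D :=
  comp (tmor (eps A d) (idm (fob (LF A) c))) (F2 (LF A) (fob (RU A) d) c).

Definition left_Hopf (C D : MonCat) (A : ComonAdj C D) : Prop :=
  forall c d, is_iso (hopf_l A c d).

Definition right_Hopf (C D : MonCat) (A : ComonAdj C D) : Prop :=
  forall d c, is_iso (hopf_r A d c).

(* Left closed structure: ? (x) X -| [X,?]^l with counit ev^X_Y, given by the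
   universal property of the counit. *)
Record LeftClosed (C : MonCat) := {
  lihom : ob C -> ob C -> ob C;
  lev : ob C -> ob C -> mor C;
  lev_hom : forall X Y, hom (lev X Y) (tob (lihom X Y) X) Y;
  lev_univ : forall X Y Z g, hom g (tob Z X) Y ->
      exists! h, hom h Z (lihom X Y) /\ comp (lev X Y) (tmor h (idm X)) = g
}.

(* Right closed structure: X (x) ? -| [X,?]^r with counit X (x) [X,Y]^r --> Y. *)
Record RightClosed (C : MonCat) := {
  rihom : ob C -> ob C -> ob C;
  rev : ob C -> ob C -> mor C;
  rev_hom : forall X Y, hom (rev X Y) (tob X (rihom X Y)) Y;
  rev_univ : forall X Y Z g, hom g (tob X Z) Y ->
      exists! h, hom h Z (rihom X Y) /\ comp (rev X Y) (tmor (idm X) h) = g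
}.

(* Closedness of a strong monoidal functor U : D -> C with monoidal structure
   Um2 A B : UA (x) UB --> U(A (x) B): the canonical morphism
   U[X,Y] --> [UX,UY] (the one corresponding to U(ev) o Um2([X,Y],X) under the
   adjunction) is an isomorphism. *)
Definition left_closed_functor (C D : MonCat) (LC : LeftClosed C) (LD : LeftClosed D)
    (U : Functor D C) (Um2 : ob D -> ob D -> mor C) : Prop :=
  forall X Y h,
    hom h (fob U (lihom LD X Y)) (lihom LC (fob U X) (fob U Y)) ->
    comp (lev LC (fob U X) (fob U Y)) (tmor h (idm (fob U X)))
      = comp (fmor U (lev LD X Y)) (Um2 (lihom LD X Y) X) ->
    is_iso h.

Definition right_closed_functor (C D : MonCat) (RC : RightClosed C) (RD : RightClosed D)
    (U : Functor D C) (Um2 : ob D -> ob D -> mor C) : Prop :=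
  forall X Y h,
    hom h (fob U (rihom RD X Y)) (rihom RC (fob U X) (fob U Y)) ->
    comp (rev RC (fob U X) (fob U Y)) (tmor (idm (fob U X)) h)
      = comp (fmor U (rev RD X Y)) (Um2 X (rihom RD X Y)) ->
    is_iso h.

(* Main.v *)
Require Import Defs.
Set Implicit Arguments.

Lemma hom_comp (C : MonCat) (f g : mor C) a b c : hom f a b -> hom g b c -> hom (comp g f) a c.
Proof. intros [H1 H2] [H3 H4]. split.
 - rewrite dom_comp; congruence.
 - rewrite cod_comp; congruence. Qed.
Lemma hom_idm (C : MonCat) (a : ob C) : hom (idm a) a a.
Proof. split; [apply dom_id|apply cod_id]. Qed.
Lemma hom_tmor (C : MonCat) (f g : mor C) a b a' b' : hom f a b -> hom g a' b' -> hom (tmor f g) (tob a a') (tob b b').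
Proof. intros [H1 H2] [H3 H4]. split; [rewrite dom_tmor|rewrite cod_tmor]; congruence. Qed.
Lemma hom_fmor (C D : MonCat) (F : Functor C D) f a b : hom f a b -> hom (fmor F f) (fob F a) (fob F b).
Proof. intros [H1 H2]. split; [rewrite fmor_dom|rewrite fmor_cod]; congruence. Qed.
Lemma cd_of (C : MonCat) (f g : mor C) a b c : hom f a b -> hom g b c -> cod f = dom g.
Proof. intros [_ H] [H' _]; congruence. Qed.
Lemma dom_of (C : MonCat) (f : mor C) a b : hom f a b -> dom f = a.
Proof. intros [H _]; exact H. Qed.
Lemma cod_of (C : MonCat) (f : mor C) a b : hom f a b -> cod f = b.
Proof. intros [_ H]; exact H. Qed.
Lemma inv_hom (C : MonCat) (f g : mor C) a b : hom f a b -> is_inverse f g -> hom g b a.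
Proof. intros [H1 H2] [H3 [H4 _]]. split; congruence. Qed.

Ltac hs := first
  [ eassumption
  | apply hom_idm
  | eapply hom_comp; [hs|hs]
  | eapply hom_tmor; [hs|hs]
  | eapply hom_fmor; hs
  | apply F2_hom
  | apply F0_hom
  | apply eta_hom
  | apply eps_hom
  | apply lev_hom
  | apply rev_hom
  | eapply inv_hom; [ apply F2_hom | solve [eauto] ] ].

Ltac cd := match goal with
  | |- cod _ = dom _ => eapply cd_of; [hs|hs]
  | |- dom _ = _ => eapply dom_of; hs
  | |- cod _ = _ => eapply cod_of; hs
  end.
Ltac ok := first [ reflexivity | cd | hs ].
Ltac hs2 := first
  [ eassumption
  | apply hom_idm
  | eapply hom_comp; [hs2|hs2]
  | eapply hom_tmor; [hs2|hs2]
  | eapply hom_fmor; hs2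
  | apply F2_hom
  | apply F0_hom
  | apply eta_hom
  | apply eps_hom
  | apply lev_hom
  | apply rev_hom
  | match goal with H : forall X Y, hom (?u X Y) _ _ |- hom (?u _ _) _ _ => apply H end ].
Ltac cd2 := match goal with
  | |- cod _ = dom _ => eapply cd_of; [hs2|hs2]
  | |- dom _ = _ => eapply dom_of; hs2
  | |- cod _ = _ => eapply cod_of; hs2
  end.
Ltac ok2 := first [ reflexivity | cd2 | hs2 ].
Lemma cA {C : MonCat} (f g h : mor C) : cod f = dom g -> cod g = dom h ->
  comp h (comp g f) = comp (comp h g) f.
Proof. apply comp_assoc. Qed.
Arguments cA {C} f g h _ _.

Lemma comp_idl' (C : MonCat) (f : mor C) b : cod f = b -> comp (idm b) f = f.
Proof. intros <-; apply comp_idl. Qed.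
Lemma comp_idr' (C : MonCat) (f : mor C) a : dom f = a -> comp f (idm a) = f.
Proof. intros <-; apply comp_idr. Qed.

Lemma adj_recover (C D : MonCat) (A : ComonAdj C D) c e g :
  hom g (fob (LF A) c) e ->
  comp (eps A e) (fmor (LF A) (comp (fmor (RU A) g) (eta A c))) = g.
Proof.
  intros Hg.
  rewrite fmor_comp by ok.
  rewrite comp_assoc by ok.
  pose proof (eps_nat A g) as E.
  rewrite (cod_of Hg), (dom_of Hg) in E. rewrite E.
  rewrite <- comp_assoc by ok.
  rewrite triangle_F. apply comp_idr'. ok.
Qed.

Lemma adj_sur (C D : MonCat) (A : ComonAdj C D) c e x :
  hom x c (fob (RU A) e) ->
  comp (fmor (RU A) (comp (eps A e) (fmor (LF A) x))) (eta A c) = x.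
Proof.
  intros Hx.
  rewrite fmor_comp by ok.
  rewrite <- comp_assoc by ok.
  pose proof (eta_nat A x) as E.
  rewrite (cod_of Hx), (dom_of Hx) in E. rewrite <- E.
  rewrite comp_assoc by ok.
  rewrite triangle_U. apply comp_idl'. ok.
Qed.

Lemma adj_inj (C D : MonCat) (A : ComonAdj C D) c e g1 g2 :
  hom g1 (fob (LF A) c) e -> hom g2 (fob (LF A) c) e ->
  comp (fmor (RU A) g1) (eta A c) = comp (fmor (RU A) g2) (eta A c) -> g1 = g2.
Proof.
  intros H1 H2 E.
  rewrite <- (@adj_recover C D A c e g1 H1), <- (@adj_recover C D A c e g2 H2), E. reflexivity.
Qed.
Arguments comp_idl' {C} f b _.
Arguments comp_idr' {C} f a _.

Lemma Um2_hom {C D : MonCat} {A : ComonAdj C D} {Um2 : ob D -> ob D -> mor C}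
  (HUm2 : forall X Y, is_inverse (F2 (RU A) X Y) (Um2 X Y)) X Y :
  hom (Um2 X Y) (tob (fob (RU A) X) (fob (RU A) Y)) (fob (RU A) (tob X Y)).
Proof. eapply inv_hom; [apply F2_hom | apply HUm2]. Qed.

Lemma Um2_F2 {C D : MonCat} {A : ComonAdj C D} {Um2 : ob D -> ob D -> mor C}
  (HUm2 : forall X Y, is_inverse (F2 (RU A) X Y) (Um2 X Y)) X Y :
  comp (Um2 X Y) (F2 (RU A) X Y) = idm (fob (RU A) (tob X Y)).
Proof. destruct (HUm2 X Y) as [_ [_ [E _]]]. rewrite E. f_equal. apply (dom_of (F2_hom _ X Y)). Qed.

Lemma F2_Um2 {C D : MonCat} {A : ComonAdj C D} {Um2 : ob D -> ob D -> mor C}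
  (HUm2 : forall X Y, is_inverse (F2 (RU A) X Y) (Um2 X Y)) X Y :
  comp (F2 (RU A) X Y) (Um2 X Y) = idm (tob (fob (RU A) X) (fob (RU A) Y)).
Proof. destruct (HUm2 X Y) as [_ [_ [_ E]]]. rewrite E. f_equal. apply (cod_of (F2_hom _ X Y)). Qed.

Lemma Um2_nat {C D : MonCat} {A : ComonAdj C D} {Um2 : ob D -> ob D -> mor C}
  (HUm2 : forall X Y, is_inverse (F2 (RU A) X Y) (Um2 X Y)) g k a b a' b' :
  hom g a b -> hom k a' b' ->
  comp (Um2 b b') (tmor (fmor (RU A) g) (fmor (RU A) k))
  = comp (fmor (RU A) (tmor g k)) (Um2 a a').
Proof.
  intros Hg Hk. pose proof (Um2_hom HUm2) as HU.
  pose proof (F2_nat (RU A) g k) as E.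
  rewrite (dom_of Hg), (dom_of Hk), (cod_of Hg), (cod_of Hk) in E.
  rewrite <- (@comp_idr' C (tmor (fmor (RU A) g) (fmor (RU A) k))
                       (tob (fob (RU A) a) (fob (RU A) a'))) by ok2.
  rewrite <- (F2_Um2 HUm2).
  rewrite (cA (Um2 a a')) by ok2.
  rewrite E.
  rewrite <- (cA (Um2 a a')) by ok2.
  rewrite (cA _ (F2 (RU A) b b')) by ok2.
  rewrite (Um2_F2 HUm2). apply comp_idl'. ok2.
Qed.

Lemma keyK {C D : MonCat} {A : ComonAdj C D} {Um2 : ob D -> ob D -> mor C}
  (HUm2 : forall X Y, is_inverse (F2 (RU A) X Y) (Um2 X Y)) c d :
  comp (Um2 (fob (LF A) c) d) (tmor (eta A c) (idm (fob (RU A) d)))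
  = comp (fmor (RU A) (hopf_l A c d)) (eta A (tob c (fob (RU A) d))).
Proof.
  pose proof (Um2_hom HUm2) as HU.
  assert (E : comp (F2 (RU A) (fob (LF A) c) d)
                (comp (fmor (RU A) (hopf_l A c d)) (eta A (tob c (fob (RU A) d))))
              = tmor (eta A c) (idm (fob (RU A) d))).
  { unfold hopf_l.
    rewrite fmor_comp by ok2.
    rewrite (cA _ _ (F2 (RU A) _ _)) by ok2.
    rewrite (cA _ _ (F2 (RU A) _ _)) by ok2.
    pose proof (F2_nat (RU A) (idm (fob (LF A) c)) (eps A d)) as N.
    rewrite dom_id, cod_id, (dom_of (eps_hom A d)), (cod_of (eps_hom A d)) in N.
    rewrite <- N.
    rewrite <- (cA _ (F2 (RU A) _ _)) by ok2.
    rewrite <- (cA _ _ (tmor _ _)) by ok2.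
    rewrite eta_comon2.
    rewrite comp_idr' by ok2.
    rewrite <- tmor_comp by ok2.
    rewrite fmor_id, comp_idl' by ok2.
    rewrite triangle_U. reflexivity. }
  rewrite <- E.
  rewrite (cA _ _ (Um2 _ _)) by ok2.
  rewrite (Um2_F2 HUm2). apply comp_idl'. ok2.
Qed.

Lemma tmor_comp_l {C : MonCat} (f g : mor C) a :
  cod f = dom g -> tmor (comp g f) (idm a) = comp (tmor g (idm a)) (tmor f (idm a)).
Proof. intros H. rewrite <- tmor_comp by (rewrite ?cod_id, ?dom_id; auto).
  f_equal. symmetry. apply comp_idl'. apply cod_id. Qed.

Lemma key8 {C D : MonCat} {A : ComonAdj C D} {Um2 : ob D -> ob D -> mor C}
  (HUm2 : forall X Y, is_inverse (F2 (RU A) X Y) (Um2 X Y))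
  (LC : LeftClosed C) (LD : LeftClosed D) c d e g h :
  hom g (fob (LF A) c) (lihom LD d e) ->
  hom h (fob (RU A) (lihom LD d e)) (lihom LC (fob (RU A) d) (fob (RU A) e)) ->
  comp (lev LC (fob (RU A) d) (fob (RU A) e)) (tmor h (idm (fob (RU A) d)))
    = comp (fmor (RU A) (lev LD d e)) (Um2 (lihom LD d e) d) ->
  comp (lev LC (fob (RU A) d) (fob (RU A) e))
       (tmor (comp h (comp (fmor (RU A) g) (eta A c))) (idm (fob (RU A) d)))
  = comp (fmor (RU A) (comp (comp (lev LD d e) (tmor g (idm d))) (hopf_l A c d)))
         (eta A (tob c (fob (RU A) d))).
Proof.
  intros Hg Hh Eh.
  pose proof (Um2_hom HUm2) as HU.
  assert (HH : hom (hopf_l A c d) (fob (LF A) (tob c (fob (RU A) d))) (tob (fob (LF A) c) d)).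
  { unfold hopf_l. eapply hom_comp. apply F2_hom. eapply hom_tmor. apply hom_idm. apply eps_hom. }
  rewrite tmor_comp_l by ok2.
  rewrite (cA _ _ (lev _ _ _)) by ok2.
  rewrite Eh.
  rewrite tmor_comp_l by ok2.
  rewrite <- (fmor_id (RU A) d).
  rewrite (cA _ _ (comp _ (Um2 _ _))) by ok2.
  rewrite <- (cA _ (Um2 _ _)) by ok2.
  rewrite (Um2_nat HUm2 Hg (@hom_idm D d)).
  rewrite fmor_id.
  rewrite <- (cA (tmor (eta A c) _) (comp _ (Um2 _ _)) _) by ok2.
  rewrite <- (cA (tmor (eta A c) _) (Um2 _ _) _) by ok2.

  rewrite (keyK HUm2).
  rewrite !fmor_comp by ok2.
  rewrite <- !cA by ok2.
  reflexivity.
Qed.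

Lemma hopf_l_hom {C D : MonCat} (A : ComonAdj C D) c d :
  hom (hopf_l A c d) (fob (LF A) (tob c (fob (RU A) d))) (tob (fob (LF A) c) d).
Proof. unfold hopf_l. eapply hom_comp. apply F2_hom. eapply hom_tmor. apply hom_idm. apply eps_hom. Qed.

Lemma yon_contra {C : MonCat} (f : mor C) a b : hom f a b ->
  (exists k, hom k b a /\ comp k f = idm a) ->
  (forall g1 g2, hom g1 b b -> hom g2 b b -> comp g1 f = comp g2 f -> g1 = g2) ->
  is_iso f.
Proof.
  intros Hf [k [Hk E]] Inj. exists k.
  destruct Hf as [Hd Hc]. destruct Hk as [Hkd Hkc].
  split; [congruence|]. split; [congruence|]. split; [rewrite Hd; exact E|].
  rewrite Hc. apply Inj.
  - eapply hom_comp; split; eauto.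
  - apply hom_idm.
  - rewrite <- cA by congruence. rewrite E. rewrite comp_idl' by congruence.
    rewrite comp_idr' by congruence. reflexivity.
Qed.

Lemma yon_cov {C : MonCat} (f : mor C) a b : hom f a b ->
  (exists k, hom k b a /\ comp f k = idm b) ->
  (forall g1 g2, hom g1 a a -> hom g2 a a -> comp f g1 = comp f g2 -> g1 = g2) ->
  is_iso f.
Proof.
  intros Hf [k [Hk E]] Inj. exists k.
  destruct Hf as [Hd Hc]. destruct Hk as [Hkd Hkc].
  split; [congruence|]. split; [congruence|]. split; [|rewrite Hc; exact E].
  rewrite Hd. apply Inj.
  - eapply hom_comp; split; eauto.
  - apply hom_idm.
  - rewrite cA by congruence. rewrite E. rewrite comp_idl' by congruence.
    rewrite comp_idr' by congruence. reflexivity.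
Qed.

Lemma iso_inv {C : MonCat} (f : mor C) a b : hom f a b -> is_iso f ->
  exists k, hom k b a /\ comp k f = idm a /\ comp f k = idm b.
Proof.
  intros [Hd Hc] [k [H1 [H2 [H3 H4]]]]. exists k.
  split; [split; congruence|]. split; [rewrite <- Hd; auto | rewrite <- Hc; auto].
Qed.

Lemma lev_ex {C : MonCat} (L : LeftClosed C) X Y Z g : hom g (tob Z X) Y ->
  exists h, hom h Z (lihom L X Y) /\ comp (lev L X Y) (tmor h (idm X)) = g.
Proof. intros H. destruct (lev_univ L H) as [h [P _]]. eauto. Qed.

Lemma lev_uniq {C : MonCat} (L : LeftClosed C) X Y Z g h1 h2 : hom g (tob Z X) Y ->
  hom h1 Z (lihom L X Y) -> comp (lev L X Y) (tmor h1 (idm X)) = g ->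
  hom h2 Z (lihom L X Y) -> comp (lev L X Y) (tmor h2 (idm X)) = g -> h1 = h2.
Proof. intros H H1 E1 H2 E2. destruct (lev_univ L H) as [h [P U]].
  rewrite <- (U h1), <- (U h2); auto. Qed.
Arguments lev_ex {C} L {X Y Z g} _.
Arguments lev_uniq {C} L {X Y Z g h1 h2} _ _ _ _ _.
Arguments adj_sur {C D} A {c e x} _.
Arguments adj_inj {C D} A {c e g1 g2} _ _ _.
Arguments iso_inv {C f a b} _ _.
Arguments yon_cov {C f a b} _ _ _.
Arguments yon_contra {C f a b} _ _ _.
Arguments key8 {C D A Um2} HUm2 LC LD {c d e g h} _ _ _.

Lemma cancel_l {C : MonCat} (h hi z1 z2 : mor C) a b c :
  hom h a b -> hom hi b a -> comp hi h = idm a -> hom z1 c a -> hom z2 c a ->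
  comp h z1 = comp h z2 -> z1 = z2.
Proof.
  intros Hh Hhi E Hz1 Hz2 Ez.
  rewrite <- (comp_idl' z1 a) by ok2.
  rewrite <- (comp_idl' z2 a) by ok2.
  rewrite <- E. rewrite <- !cA by ok2. rewrite Ez. reflexivity.
Qed.

Lemma cancel_r {C : MonCat} (h hi z1 z2 : mor C) a b c :
  hom h a b -> hom hi b a -> comp h hi = idm b -> hom z1 b c -> hom z2 b c ->
  comp z1 h = comp z2 h -> z1 = z2.
Proof.
  intros Hh Hhi E Hz1 Hz2 Ez.
  rewrite <- (comp_idr' z1 b) by ok2.
  rewrite <- (comp_idr' z2 b) by ok2.
  rewrite <- E. rewrite !cA by ok2. rewrite Ez. reflexivity.
Qed.

Lemma left_main {C D : MonCat} {A : ComonAdj C D} {Um2 : ob D -> ob D -> mor C}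
  (HUm2 : forall X Y, is_inverse (F2 (RU A) X Y) (Um2 X Y))
  (LC : LeftClosed C) (LD : LeftClosed D) :
  left_Hopf A <-> left_closed_functor LC LD (RU A) Um2.
Proof.
  pose proof (Um2_hom HUm2) as HU.
  pose proof (hopf_l_hom A) as HHh.
  split.
  - intros HH d e h Hh Eh.
    apply (yon_cov Hh).
    + set (b := lihom LC (fob (RU A) d) (fob (RU A) e)).
      set (w := comp (lev LC (fob (RU A) d) (fob (RU A) e)) (tmor (idm b) (idm (fob (RU A) d)))).
      assert (Hw : hom w (tob b (fob (RU A) d)) (fob (RU A) e)) by (unfold w; ok2).
      set (psi := comp (eps A e) (fmor (LF A) w)).
      pose proof (adj_sur A Hw) as Ew. fold psi in Ew.
      destruct (iso_inv (HHh b d) (HH b d)) as [Hi [HHi [E1 E2]]].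
      assert (Hphi : hom (comp psi Hi) (tob (fob (LF A) b) d) e) by (unfold psi; ok2).
      destruct (lev_ex LD Hphi) as [g [Hg Eg]].
      exists (comp (fmor (RU A) g) (eta A b)). split; [ok2|].
      eapply (lev_uniq LC (g := w)); [exact Hw| ok2 | | apply hom_idm | reflexivity].
      rewrite (key8 HUm2 LC LD Hg Hh Eh), Eg.
      rewrite <- (cA _ Hi psi) by ok2. rewrite E1.
      rewrite comp_idr' by (unfold psi; ok2). exact Ew.
    + intros g1 g2 Hg1 Hg2 Eg.
      pose proof (adj_sur A Hg1) as Ew1.
      pose proof (adj_sur A Hg2) as Ew2.
      set (ga1 := comp (eps A (lihom LD d e)) (fmor (LF A) g1)) in *.
      set (ga2 := comp (eps A (lihom LD d e)) (fmor (LF A) g2)) in *.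
      assert (Hga1 : hom ga1 (fob (LF A) (fob (RU A) (lihom LD d e))) (lihom LD d e)) by (unfold ga1; ok2).
      assert (Hga2 : hom ga2 (fob (LF A) (fob (RU A) (lihom LD d e))) (lihom LD d e)) by (unfold ga2; ok2).
      pose proof (key8 HUm2 LC LD Hga1 Hh Eh) as K1.
      pose proof (key8 HUm2 LC LD Hga2 Hh Eh) as K2.
      rewrite Ew1 in K1. rewrite Ew2 in K2. rewrite Eg in K1. rewrite K1 in K2.
      set (a := fob (RU A) (lihom LD d e)) in *.
      set (H := hopf_l A a d) in *.
      assert (EH : comp (comp (lev LD d e) (tmor ga1 (idm d))) H
                   = comp (comp (lev LD d e) (tmor ga2 (idm d))) H).
      { eapply (adj_inj A (c := tob a (fob (RU A) d)) (e := e)); [ok2|ok2|exact K2]. }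
      destruct (iso_inv (HHh a d) (HH a d)) as [Hi [HHi [E1 E2]]].
      fold H in HHi, E1, E2.
      apply (cancel_r (c := e) (HHh a d) HHi E2) in EH; [|ok2|ok2].
      assert (Eg12 : ga1 = ga2).
      { eapply (lev_uniq LD (g := comp (lev LD d e) (tmor ga1 (idm d)))); [ok2|exact Hga1|reflexivity|exact Hga2|symmetry; exact EH]. }
      rewrite <- Ew1, <- Ew2, Eg12. reflexivity.
  - intros HC c d.
    apply (yon_contra (HHh c d)).
    + set (a := fob (LF A) (tob c (fob (RU A) d))).
      assert (Hg0 : hom (comp (fmor (RU A) (lev LD d a)) (Um2 (lihom LD d a) d))
                     (tob (fob (RU A) (lihom LD d a)) (fob (RU A) d)) (fob (RU A) a)) by ok2.
      destruct (lev_ex LC Hg0) as [h [Hh Eh]].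
      destruct (iso_inv Hh (HC d a h Hh Eh)) as [hi [Hhi [E1 E2]]].
      assert (Hy0 : hom (comp (fmor (RU A) (idm a)) (eta A (tob c (fob (RU A) d))))
                     (tob c (fob (RU A) d)) (fob (RU A) a)) by ok2.
      destruct (lev_ex LC Hy0) as [y [Hy Ey]].
      assert (Hx : hom (comp hi y) c (fob (RU A) (lihom LD d a))) by ok2.
      pose proof (adj_sur A Hx) as Ex.
      set (ga := comp (eps A (lihom LD d a)) (fmor (LF A) (comp hi y))) in *.
      assert (Hga : hom ga (fob (LF A) c) (lihom LD d a)) by (unfold ga; ok2).
      exists (comp (lev LD d a) (tmor ga (idm d))). split; [ok2|].
      pose proof (key8 HUm2 LC LD Hga Hh Eh) as K.
      rewrite Ex in K. rewrite (cA y hi h) in K by ok2. rewrite E2 in K.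
      rewrite comp_idl' in K by ok2. rewrite Ey in K.
      symmetry in K.
      eapply (adj_inj A (c := tob c (fob (RU A) d)) (e := a)) in K; [| ok2 | ok2].
      exact K.
    + intros g1 g2 Hg1 Hg2 Eg.
      set (b := tob (fob (LF A) c) d) in *.
      assert (Hg0 : hom (comp (fmor (RU A) (lev LD d b)) (Um2 (lihom LD d b) d))
                     (tob (fob (RU A) (lihom LD d b)) (fob (RU A) d)) (fob (RU A) b)) by ok2.
      destruct (lev_ex LC Hg0) as [h [Hh Eh]].
      destruct (iso_inv Hh (HC d b h Hh Eh)) as [hi [Hhi [E1 E2]]].
      destruct (lev_ex LD Hg1) as [ga1 [Hga1 Ega1]].
      destruct (lev_ex LD Hg2) as [ga2 [Hga2 Ega2]].
      pose proof (key8 HUm2 LC LD Hga1 Hh Eh) as K1.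
      pose proof (key8 HUm2 LC LD Hga2 Hh Eh) as K2.
      rewrite Ega1 in K1. rewrite Ega2 in K2. rewrite Eg in K1.
      assert (Ez : comp h (comp (fmor (RU A) ga1) (eta A c)) = comp h (comp (fmor (RU A) ga2) (eta A c))).
      { eapply (lev_uniq LC (g := comp (fmor (RU A) (comp g2 (hopf_l A c d))) (eta A (tob c (fob (RU A) d))))); [ok2|ok2|exact K1|ok2|exact K2]. }
      apply (cancel_l (c := c) Hh Hhi E1) in Ez; [|ok2|ok2].
      apply (adj_inj A Hga1 Hga2) in Ez.
      rewrite <- Ega1, <- Ega2, Ez. reflexivity.
Qed.
Unset Implicit Arguments.

Definition revC (C : MonCat) : MonCat.
Proof.
  refine {| ob := ob C; mor := mor C; dom := @dom C; cod := @cod C; idm := @idm C;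
            comp := @comp C; tob := fun a b => tob b a; tmor := fun f g => tmor g f;
            munit := munit C |}.
  - apply dom_id.
  - apply cod_id.
  - apply dom_comp.
  - apply cod_comp.
  - apply comp_idl.
  - apply comp_idr.
  - apply comp_assoc.
  - intros f g; apply dom_tmor.
  - intros f g; apply cod_tmor.
  - intros a b; apply tmor_id.
  - intros f g f' g' H1 H2; apply tmor_comp; auto.
  - intros a b c; symmetry; apply tob_assoc.
  - intros f g h; symmetry; apply tmor_assoc.
  - apply tob_unitr.
  - apply tob_unitl.
  - apply tmor_unitr.
  - apply tmor_unitl.
Defined.

Definition revF {C D : MonCat} (F : Functor C D) : Functor (revC C) (revC D) :=
  @Build_Functor (revC C) (revC D) (fob F) (fmor F) (fmor_dom F) (fmor_cod F)
     (fmor_id F) (fmor_comp F).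

Definition revCF {C D : MonCat} (F : ComonFun C D) : ComonFun (revC C) (revC D).
Proof.
  refine {| cfun := revF F; F2 := fun X Y => F2 F Y X; F0 := F0 F |}.
  - intros X Y; apply (F2_hom F Y X).
  - intros f g; apply (F2_nat F g f).
  - apply (F0_hom F).
  - intros X Y Z; symmetry; apply (F2_coassoc F Z Y X).
  - intros X; apply (F0_counitr F X).
  - intros X; apply (F0_counitl F X).
Defined.

Definition revA {C D : MonCat} (A : ComonAdj C D) : ComonAdj (revC C) (revC D).
Proof.
  refine {| LF := revCF (LF A); RU := revCF (RU A); eta := eta A; eps := eps A |}.
  - apply (eta_hom A).
  - apply (eta_nat A).
  - apply (eps_hom A).
  - apply (eps_nat A).
  - apply (triangle_F A).
  - apply (triangle_U A).
  - intros X Y; apply (eta_comon2 A Y X).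
  - apply (eta_comon0 A).
  - intros X Y; apply (eps_comon2 A Y X).
  - apply (eps_comon0 A).
Defined.

Definition revL {C : MonCat} (R : RightClosed C) : LeftClosed (revC C).
Proof.
  refine (@Build_LeftClosed (revC C) (rihom R) (rev R) _ _).
  - apply (rev_hom R).
  - apply (rev_univ R).
Defined.

Theorem mainTheorem5 (C D : MonCat) (A : ComonAdj C D)
    (Um2 : ob D -> ob D -> mor C)
    (HUm2 : forall X Y, is_inverse (F2 (RU A) X Y) (Um2 X Y)) :
  (forall (LC : LeftClosed C) (LD : LeftClosed D),
      left_Hopf A <-> left_closed_functor LC LD (RU A) Um2) /\
  (forall (RC : RightClosed C) (RD : RightClosed D),
      right_Hopf A <-> right_closed_functor RC RD (RU A) Um2).
Proof.
  split.
  - intros LC LD. exact (left_main HUm2 LC LD).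
  - intros RC RD.
    assert (HUm2' : forall X Y, is_inverse (F2 (RU (revA A)) X Y) (Um2 Y X)).
    { intros X Y. exact (HUm2 Y X). }
    pose proof (left_main (A := revA A) (Um2 := fun X Y => Um2 Y X) HUm2' (revL RC) (revL RD)) as M.
    split.
    + intros HR. apply M. intros c d. exact (HR d c).
    + intros HL d c. apply M in HL. exact (HL c d).
Qed.
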